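(* Fix $N>0$ and let $S=\{(v,w)\in\mathbb{C}^2\times\mathbb{C}^2:\ [v\,w]=N\}$ where $[a\,b]:=a^{\dot2}b^{\dot1}-a^{\dot1}b^{\dot2}$. For $u\in\mathbb{C}^2\setminus\{0\}$ put $\hat u=(-\bar u^{\dot2},\bar u^{\dot1})$, $\|u\|^2=|u^{\dot1}|^2+|u^{\dot2}|^2$, $\vartheta=\sqrt{1+N/\|u\|^2}$, and for $\sigma\in\mathbb{C}^\times$ $$\Phi(u,\sigma)=\big(v(\sigma),w(\sigma)\big),\qquad v(\sigma)=u+\sigma\hat u,\quad w(\sigma)=\hat u+\sigma^{-1}\vartheta^2u .$$ Then: (i) $\Phi(u,\sigma)\in S$ for all $u\neq0,\sigma\neq0$; (ii) the map $\iota(v,w)=(-\hat w,\hat v)$ is a fixed-point-free antiholomorphic involution of $S$, and each reparametrized curve $\sigma\mapsto\Phi(u,\vartheta\sigma)$ is mapped by $\iota$ to itself, the point with parameter $\sigma$ going to the point with parameter $-1/\bar\sigma$; (iii) let $\Omega_N$ be the holomorphic $3$-form on $S$ equal to $-\,dv^{\dot1}\wedge dv^{\dot2}\wedge dw^{\dot1}/v^{\dot1}$ where $v^{\dot1}\neq0$ (the Poincaré residue of $-d^2v\wedge d^2w/([v\,w]-N)$). Then the fibre integral of $\Phi^*\Omega_N$ over a small circle $|\sigma|=\varepsilon$, oriented counterclockwise, satisfies $$\frac{1}{2\pi}\oint_{|\sigma|=\varepsilon}\Phi^*\Omega_N=\omega_N:=i\big(du^{\dot1}\wedge d\bar u^{\dot1}+du^{\dot2}\wedge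 d\bar u^{\dot2}\big)+iN\,\frac{[u\,du]\wedge[\hat u\,d\hat u]}{\|u\|^4},$$ and $\omega_N=i\partial\bar\partial K$ with $K=\|u\|^2+N\log\|u\|^2$.
   Context: Complex conjugation of a pair $a=(a^{\dot1},a^{\dot2})$ is the ''quaternionic conjugate'' $\hat a=(-\bar a^{\dot2},\bar a^{\dot1})$, applied componentwise also to differentials; $[u\,du]=u^{\dot2}du^{\dot1}-u^{\dot1}du^{\dot2}$ and $[\hat u\,d\hat u]=\bar u^{\dot2}d\bar u^{\dot1}-\bar u^{\dot1}d\bar u^{\dot2}$. The fibre integral of a form $d\sigma\wedge\beta+(\text{terms without }d\sigma,d\bar\sigma)$ over the circle is $(\oint\cdot\,d\sigma)\,\beta$, computed by residues in $\sigma$. *)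

(* Defs.v *)
From Stdlib Require Import Reals.
From Coquelicot Require Import Coquelicot.

Open Scope R_scope.

Definition C2 : Type := (C * C)%type.
Definition C4 : Type := (C2 * C2)%type.
Definition C3 : Type := (C2 * C)%type.

Definition C2add (a b : C2) : C2 := ((fst a + fst b)%C, (snd a + snd b)%C).
Definition C2scal (c : C) (a : C2) : C2 := ((c * fst a)%C, (c * snd a)%C).
Definition C2opp (a : C2) : C2 := ((- fst a)%C, (- snd a)%C).
Definition C2zero : C2 := (RtoC 0, RtoC 0).

Definition bracket (a b : C2) : C := (snd a * fst b - fst a * snd b)%C.

Definition hat (a : C2) : C2 := ((- Cconj (snd a))%C, Cconj (fst a)).

Definition nrm2 (u : C2) : R := (Cmod (fst u))^2 + (Cmod (snd u))^2.

Definition theta (N : R) (u : C2) : R := sqrt (1 + N / nrm2 u).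

Definition Squad (N : R) (p : C4) : Prop := bracket (fst p) (snd p) = RtoC N.

Definition Phi (N : R) (u : C2) (s : C) : C4 :=
  (C2add u (C2scal s (hat u)),
   C2add (hat u) (C2scal (/ s * RtoC ((theta N u)^2))%C u)).

Definition iotaS (p : C4) : C4 := (C2opp (hat (snd p)), hat (fst p)).

(** ---- Holomorphy on C^4 (Osgood's definition: continuous and complex
   differentiable in each of the four variables separately). *)
Definition comp4 (p : C4) (j : nat) : C :=
  match j with
  | 0%nat => fst (fst p) | 1%nat => snd (fst p)
  | 2%nat => fst (snd p) | _ => snd (snd p) end.

Definition upd4 (p : C4) (j : nat) (z : C) : C4 :=
  match j with
  | 0%nat => ((z, snd (fst p)), snd p)
  | 1%nat => ((fst (fst p), z), snd p)
  | 2%nat => (fst p, (z, snd (snd p)))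
  | _ => (fst p, (fst (snd p), z)) end.

Definition holomorphic4 (F : C4 -> C) : Prop :=
  forall p : C4,
    @continuous (prod_UniformSpace (prod_UniformSpace C_UniformSpace C_UniformSpace)
                                   (prod_UniformSpace C_UniformSpace C_UniformSpace))
                C_UniformSpace F p /\
    forall j : nat, (j < 4)%nat ->
      @ex_derive C_AbsRing C_NormedModule (fun z => F (upd4 p j z)) (comp4 p j).

Definition antiholomorphic4 (f : C4 -> C4) : Prop :=
  forall k : nat, (k < 4)%nat -> holomorphic4 (fun p => Cconj (comp4 (f p) k)).

Definition dR (g : R -> C) : C :=
  (Derive (fun t => Re (g t)) 0, Derive (fun t => Im (g t)) 0).

Definition dPhi (N : R) (p x : C3) : C4 :=
  let g := fun t : R =>
    Phi N (C2add (fst p) (C2scal (RtoC t) (fst x))) (snd p + RtoC t * snd x)%C in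
  ((dR (fun t => fst (fst (g t))), dR (fun t => snd (fst (g t)))),
   (dR (fun t => fst (snd (g t))), dR (fun t => snd (snd (g t))))).

(** ---- The 3-form Omega_N = - dv^1 /\ dv^2 /\ dw^1 / v^1 (on the chart v^1 <> 0),
   evaluated at a point q of C^4 on three (real) tangent vectors a b c of C^4:
   (alpha1 /\ alpha2 /\ alpha3)(a,b,c) = det [alpha_i(x_j)]. *)
Definition det3 (a11 a12 a13 a21 a22 a23 a31 a32 a33 : C) : C :=
  (a11 * (a22 * a33 - a23 * a32) - a12 * (a21 * a33 - a23 * a31)
   + a13 * (a21 * a32 - a22 * a31))%C.

Definition OmegaN (q a b c : C4) : C :=
  (- det3 (fst (fst a)) (fst (fst b)) (fst (fst c))
          (snd (fst a)) (snd (fst b)) (snd (fst c))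
          (fst (snd a)) (fst (snd b)) (fst (snd c))
     / fst (fst q))%C.

Definition PhiOmega (N : R) (p x y z : C3) : C :=
  OmegaN (Phi N (fst p) (snd p)) (dPhi N p x) (dPhi N p y) (dPhi N p z).

Definition RIntC (f : R -> C) (a b : R) : C :=
  (RInt (fun t => Re (f t)) a b, RInt (fun t => Im (f t)) a b).

(** Fibre integral over the circle |sigma| = eps, counterclockwise,
   parametrized by gamma(t) = eps e^{it}, t in [0, 2 pi]: the 2-form on
   u-space whose value on real tangent vectors X, Y of C^2 is
   \int_0^{2pi} (Phi^*Omega_N)_{(u,gamma t)}(gamma'(t), (X,0), (Y,0)) dt. *)
Definition gammaC (eps t : R) : C := (eps * cos t, eps * sin t).
Definition gammaC' (eps t : R) : C := (- eps * sin t, eps * cos t).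

Definition fibre_int (N eps : R) (u X Y : C2) : C :=
  RIntC (fun t => PhiOmega N (u, gammaC eps t) (C2zero, gammaC' eps t)
                          (X, RtoC 0) (Y, RtoC 0)) 0 (2 * PI).

(** omega_N evaluated on real tangent vectors X, Y of C^2 at u, using
   du^j(X) = X^j, d\bar u^j(X) = conj X^j, (a /\ b)(X,Y) = a(X)b(Y) - a(Y)b(X),
   [u du] = u^2 du^1 - u^1 du^2, [\hat u d\hat u] = \bar u^2 d\bar u^1 - \bar u^1 d\bar u^2. *)
Definition wedge1 (a b : C2 -> C) (X Y : C2) : C := (a X * b Y - a Y * b X)%C.
Definition du1 (X : C2) : C := fst X.
Definition du2 (X : C2) : C := snd X.
Definition dub1 (X : C2) : C := Cconj (fst X).
Definition dub2 (X : C2) : C := Cconj (snd X).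

Definition omegaN (N : R) (u X Y : C2) : C :=
  let udu := fun X : C2 => (snd u * du1 X - fst u * du2 X)%C in
  let hdh := fun X : C2 => (Cconj (snd u) * dub1 X - Cconj (fst u) * dub2 X)%C in
  (Ci * (wedge1 du1 dub1 X Y + wedge1 du2 dub2 X Y)
   + Ci * RtoC N * wedge1 udu hdh X Y / RtoC ((nrm2 u)^2))%C.

Definition pdR (f : C2 -> C) (u e : C2) : C :=
  dR (fun t => f (C2add u (C2scal (RtoC t) e))).

Definition e2 (j : nat) (c : C) : C2 :=
  match j with 0%nat => (c, RtoC 0) | _ => (RtoC 0, c) end.

Definition Wd (j : nat) (f : C2 -> C) (u : C2) : C :=
  (/ 2 * (pdR f u (e2 j (RtoC 1)) - Ci * pdR f u (e2 j Ci)))%C.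
Definition Wdb (j : nat) (f : C2 -> C) (u : C2) : C :=
  (/ 2 * (pdR f u (e2 j (RtoC 1)) + Ci * pdR f u (e2 j Ci)))%C.

Definition duj (j : nat) (X : C2) : C := match j with 0%nat => du1 X | _ => du2 X end.
Definition dubj (j : nat) (X : C2) : C := match j with 0%nat => dub1 X | _ => dub2 X end.

Definition ddbar (f : C2 -> C) (u X Y : C2) : C :=
  (Wd 0 (Wdb 0 f) u * wedge1 (duj 0) (dubj 0) X Y
   + Wd 0 (Wdb 1 f) u * wedge1 (duj 0) (dubj 1) X Y
   + Wd 1 (Wdb 0 f) u * wedge1 (duj 1) (dubj 0) X Y
   + Wd 1 (Wdb 1 f) u * wedge1 (duj 1) (dubj 1) X Y)%C.

Definition Kpot (N : R) (u : C2) : C := RtoC (nrm2 u + N * ln (nrm2 u)).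

(* Main.v *)
Require Import Defs.
From Stdlib Require Import Reals Lra Lia FunctionalExtensionality Classical.
From Coquelicot Require Import Coquelicot.
Open Scope R_scope.


Definition HD (g : R -> C) (l : C) : Prop :=
  is_derive (fun t => fst (g t)) 0 (fst l) /\ is_derive (fun t => snd (g t)) 0 (snd l).

Lemma HD_dR g l : HD g l -> dR g = l.
Proof. intros [H1 H2]. unfold dR. destruct l as [a b].
  f_equal; apply is_derive_unique; assumption. Qed.

Lemma HD_ext g h l : (forall t, g t = h t) -> HD h l -> HD g l.
Proof. intros E [H1 H2]; split; eapply is_derive_ext; try eassumption; intro t; simpl; rewrite E; auto. Qed.

Lemma HD_ext_loc g h l : locally 0 (fun t => g t = h t) -> HD h l -> HD g l.
Proof. intros E [H1 H2]; split.
- apply (is_derive_ext_loc (fun t => fst (h t))); auto.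
  apply (filter_imp (fun t => g t = h t)); [intros t ->; reflexivity| exact E].
- apply (is_derive_ext_loc (fun t => snd (h t))); auto.
  apply (filter_imp (fun t => g t = h t)); [intros t ->; reflexivity| exact E]. Qed.

Lemma HD_const c : HD (fun _ => c) (RtoC 0).
Proof. split; simpl; auto_derive; auto. Qed.

Lemma HD_lin c : HD (fun t => (RtoC t * c)%C) c.
Proof. destruct c as [a b]; split; simpl; auto_derive; auto; ring. Qed.

Ltac toR := repeat match goal with H : is_derive _ _ _ |- _ => apply is_derive_Reals in H end; apply is_derive_Reals.

Lemma HD_plus g h a b : HD g a -> HD h b -> HD (fun t => (g t + h t)%C) (a + b)%C.
Proof. intros [A1 A2] [B1 B2]; split; simpl; toR.
  apply (derivable_pt_lim_plus (fun t => fst (g t)) (fun t => fst (h t))); auto.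
  apply (derivable_pt_lim_plus (fun t => snd (g t)) (fun t => snd (h t))); auto. Qed.

Lemma HD_opp g a : HD g a -> HD (fun t => (- g t)%C) (- a)%C.
Proof. intros [A1 A2]; split; simpl; toR.
  apply (derivable_pt_lim_opp (fun t => fst (g t))); auto.
  apply (derivable_pt_lim_opp (fun t => snd (g t))); auto. Qed.

Lemma HD_minus g h a b : HD g a -> HD h b -> HD (fun t => (g t - h t)%C) (a - b)%C.
Proof. intros A B. unfold Cminus. apply HD_plus; auto. apply HD_opp; auto. Qed.

Lemma HD_mult g h a b : HD g a -> HD h b ->
  HD (fun t => (g t * h t)%C) (a * h 0 + g 0 * b)%C.
Proof. intros [A1 A2] [B1 B2]; split; simpl; toR.
- replace (fst a * fst (h 0) - snd a * snd (h 0) + (fst (g 0) * fst b - snd (g 0) * snd b))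
   with ((fst a * fst (h 0) + fst (g 0) * fst b) - (snd a * snd (h 0) + snd (g 0) * snd b)) by ring.
  apply (derivable_pt_lim_minus (fun t => fst (g t) * fst (h t)) (fun t => snd (g t) * snd (h t)));
  [apply (derivable_pt_lim_mult (fun t => fst (g t)) (fun t => fst (h t)))
  |apply (derivable_pt_lim_mult (fun t => snd (g t)) (fun t => snd (h t)))]; auto.
- replace (fst a * snd (h 0) + snd a * fst (h 0) + (fst (g 0) * snd b + snd (g 0) * fst b))
   with ((fst a * snd (h 0) + fst (g 0) * snd b) + (snd a * fst (h 0) + snd (g 0) * fst b)) by ring.
  apply (derivable_pt_lim_plus (fun t => fst (g t) * snd (h t)) (fun t => snd (g t) * fst (h t)));
  [apply (derivable_pt_lim_mult (fun t => fst (g t)) (fun t => snd (h t)))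
  |apply (derivable_pt_lim_mult (fun t => snd (g t)) (fun t => fst (h t)))]; auto.
Qed.

Lemma HD_conj g a : HD g a -> HD (fun t => Cconj (g t)) (Cconj a).
Proof. intros [A1 A2]; split; simpl; toR; auto.
  apply (derivable_pt_lim_opp (fun t => snd (g t))); auto. Qed.

Lemma HD_RtoC f l : is_derive f 0 l -> HD (fun t => RtoC (f t)) (RtoC l).
Proof. intros A; split; simpl; auto. auto_derive; auto. Qed.

Lemma HD_RtoC_inv f l : HD (fun t => RtoC (f t)) l -> is_derive f 0 (fst l).
Proof. intros [A _]; exact A. Qed.

Lemma dpl_eq f x l1 l2 : derivable_pt_lim f x l1 -> l1 = l2 -> derivable_pt_lim f x l2.
Proof. intros H ->; exact H. Qed.

Lemma HD_inv g a : g 0 <> RtoC 0 -> HD g a -> HD (fun t => (/ g t)%C) (- a / (g 0 * g 0))%C.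
Proof. intros Hz [A1 A2].
  assert (Hn : fst (g 0) * fst (g 0) + snd (g 0) * snd (g 0) <> 0).
  { intro E. apply Hz. destruct (g 0) as [x y]; simpl in *.
    assert (x = 0) by nra. assert (y = 0) by nra. subst; reflexivity. }
  apply is_derive_Reals in A1; apply is_derive_Reals in A2.
  assert (D : derivable_pt_lim (fun t => fst (g t) * fst (g t) + snd (g t) * snd (g t)) 0
     (fst a * fst (g 0) + fst (g 0) * fst a + (snd a * snd (g 0) + snd (g 0) * snd a))).
  { apply (derivable_pt_lim_plus (fun t => fst (g t) * fst (g t)) (fun t => snd (g t) * snd (g t)));
    [apply (derivable_pt_lim_mult (fun t => fst (g t)) (fun t => fst (g t)))
    |apply (derivable_pt_lim_mult (fun t => snd (g t)) (fun t => snd (g t)))]; auto. }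
  split; apply is_derive_Reals.
- eapply derivable_pt_lim_ext. { instantiate (1 := fun t => fst (g t) / (fst (g t) * fst (g t) + snd (g t) * snd (g t))). intro t. simpl. unfold Rdiv. f_equal. f_equal. ring. }
  eapply dpl_eq. { apply (derivable_pt_lim_div (fun t => fst (g t)) _ 0 (fst a) _ A1 D Hn). }
  destruct a as [a1 a2]; destruct (g 0) as [x y]; simpl in *. unfold Rsqr. field. nra.
- eapply derivable_pt_lim_ext. { instantiate (1 := fun t => (- snd (g t)) / (fst (g t) * fst (g t) + snd (g t) * snd (g t))). intro t. simpl. unfold Rdiv. f_equal. f_equal. ring. }
  eapply dpl_eq. { apply (derivable_pt_lim_div (fun t => - snd (g t)) _ 0 (- snd a) _ (derivable_pt_lim_opp (fun t => snd (g t)) 0 _ A2) D Hn). }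
  destruct a as [a1 a2]; destruct (g 0) as [x y]; simpl in *. unfold Rsqr. field. nra.
Qed.


Lemma Cconj_RtoC r : Cconj (RtoC r) = RtoC r.
Proof. unfold Cconj, RtoC; simpl; f_equal; ring. Qed.
Lemma Cconj_inv a : Cconj (/ a) = (/ Cconj a)%C.
Proof. destruct a as [x y]; unfold Cconj, Cinv; simpl; replace (- y * (- y * 1)) with (y * (y * 1)) by ring; f_equal; unfold Rdiv; ring. Qed.
Lemma Cconj_Ci : Cconj Ci = (- Ci)%C.
Proof. unfold Cconj, Ci, Copp; simpl; f_equal; ring. Qed.

Ltac conjs := repeat (rewrite ?Cplus_conj, ?Cminus_conj, ?Cmult_conj, ?Copp_conj, ?Cconj_RtoC, ?Cconj_inv, ?Cconj_conj, ?Cconj_Ci, ?Cpow_conj).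

Definition rC (q : C2) : C := (fst q * Cconj (fst q) + snd q * Cconj (snd q))%C.

Lemma nrm2_rC q : RtoC (nrm2 q) = rC q.
Proof. unfold nrm2, rC. rewrite RtoC_plus, !Cmod2_conj. reflexivity. Qed.

Lemma nrm2_ge0 q : 0 <= nrm2 q.
Proof. unfold nrm2. nra. Qed.

Lemma theta2 N q : 0 < N -> (theta N q)^2 = 1 + N / nrm2 q.
Proof. intro HN. unfold theta. apply pow2_sqrt.
  destruct (Req_dec (nrm2 q) 0) as [E|E].
  - rewrite E. unfold Rdiv. rewrite Rinv_0. lra.
  - assert (0 < nrm2 q) by (pose proof (nrm2_ge0 q); lra).
    assert (0 < N / nrm2 q) by (apply Rdiv_lt_0_compat; auto). lra. Qed.

Lemma theta2_C N q : 0 < N -> RtoC ((theta N q)^2) = (1 + RtoC N * / rC q)%C.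
Proof. intro HN. rewrite theta2 by auto. rewrite <- nrm2_rC.
  destruct (Req_dec (nrm2 q) 0) as [E|E].
  - rewrite E. unfold Rdiv. rewrite Rinv_0. unfold RtoC, Cinv, Cplus, Cmult; simpl. f_equal.
    + unfold Rdiv; rewrite ?Rmult_0_l, ?Rinv_0; ring.
    + unfold Rdiv; rewrite ?Rmult_0_l, ?Rinv_0; ring.
  - rewrite RtoC_plus, <- RtoC_inv by auto. rewrite <- RtoC_mult. reflexivity. Qed.

Lemma nrm2_pos u : u <> C2zero -> 0 < nrm2 u.
Proof. intro H. pose proof (nrm2_ge0 u). destruct (Req_dec (nrm2 u) 0) as [E|E]; [|lra].
  exfalso. apply H. unfold nrm2 in E. destruct u as [a b]. simpl in E.
  pose proof (Cmod_ge_0 a). pose proof (Cmod_ge_0 b).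
  assert (Ea : Cmod a = 0) by nra. assert (Eb : Cmod b = 0) by nra.
  apply Cmod_eq_0 in Ea. apply Cmod_eq_0 in Eb. subst. reflexivity. Qed.

Lemma rC_nz u : u <> C2zero -> rC u <> RtoC 0.
Proof. intro H. rewrite <- nrm2_rC. intro E. apply RtoC_inj in E. pose proof (nrm2_pos u H). lra. Qed.

Lemma part1 N (HN : 0 < N) (u : C2) (s : C) : u <> C2zero -> s <> RtoC 0 -> Squad N (Phi N u s).
Proof. intros Hu Hs. pose proof (rC_nz u Hu) as Hr. unfold Squad, Phi, bracket, C2add, C2scal, hat.
  cbn [fst snd]. rewrite theta2_C by auto. unfold rC in *. destruct u as [u1 u2]. cbn [fst snd] in *.
  field. auto. Qed.

Lemma iota_Squad N (p : C4) : Squad N p -> Squad N (iotaS p).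
Proof. destruct p as [[v1 v2] [w1 w2]]. unfold Squad, iotaS, bracket, C2opp, hat; cbn [fst snd].
  intro H. rewrite <- Cconj_RtoC, <- H. conjs. ring. Qed.

Lemma iota_invol (p : C4) : iotaS (iotaS p) = p.
Proof. destruct p as [[v1 v2] [w1 w2]]. unfold iotaS, C2opp, hat; cbn [fst snd].
  conjs. f_equal; f_equal; ring. Qed.

Lemma iota_nofix N (HN : 0 < N) (p : C4) : Squad N p -> iotaS p <> p.
Proof. destruct p as [[v1 v2] [w1 w2]]. unfold Squad, iotaS, bracket, C2opp, hat; cbn [fst snd].
  intros H E. injection E; intros E4 E3 E2 E1.
  rewrite <- E1, <- E2 in H.
  assert (H' : RtoC (- (Cmod w1 ^ 2 + Cmod w2 ^ 2)) = RtoC N).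
  { rewrite <- H. rewrite RtoC_opp, RtoC_plus, !Cmod2_conj. ring. }
  apply RtoC_inj in H'. pose proof (pow2_ge_0 (Cmod w1)). pose proof (pow2_ge_0 (Cmod w2)). lra. Qed.

Lemma theta_pos N u : 0 < N -> 0 < theta N u.
Proof. intro HN. unfold theta. apply sqrt_lt_R0.
  destruct (Req_dec (nrm2 u) 0) as [E|E].
  - rewrite E. unfold Rdiv. rewrite Rinv_0. lra.
  - assert (0 < nrm2 u) by (pose proof (nrm2_ge0 u); lra).
    assert (0 < N / nrm2 u) by (apply Rdiv_lt_0_compat; auto). lra. Qed.

Lemma Cconj_nz s : s <> RtoC 0 -> Cconj s <> RtoC 0.
Proof. intros H E. apply H. rewrite <- (Cconj_conj s), E. apply Cconj_RtoC. Qed.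

Lemma iota_Phi N (HN : 0 < N) (u : C2) (s : C) : u <> C2zero -> s <> RtoC 0 ->
      iotaS (Phi N u (RtoC (theta N u) * s)%C)
      = Phi N u (RtoC (theta N u) * (- / Cconj s))%C.
Proof. intros Hu Hs. pose proof (theta_pos N u HN) as Ht.
  assert (Htc : RtoC (theta N u) <> RtoC 0) by (intro E; apply RtoC_inj in E; lra).
  pose proof (Cconj_nz s Hs) as Hcs.
  unfold iotaS, Phi, C2opp, C2add, C2scal, hat. cbn [fst snd]. rewrite RtoC_pow.
  set (th := RtoC (theta N u)). destruct u as [u1 u2]. cbn [fst snd]. conjs.
  unfold th. rewrite Cconj_RtoC. fold th.
  f_equal; f_equal; field; auto.
Qed.


Lemma normC0 (z : C) : z = RtoC 0 -> @norm C_AbsRing C_NormedModule z = 0.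
Proof. intros ->. apply Cmod_0. Qed.
Lemma exd_id a : @ex_derive C_AbsRing C_NormedModule (fun z => z) a.
Proof. exists (RtoC 1). split.
 - apply is_linear_scal_l.
 - intros x Hx eps. apply filter_forall. intro y.
   eapply Rle_trans. right. apply normC0.
   + change ((y - x) - (y - x) * RtoC 1 = RtoC 0)%C. ring.
   + apply Rmult_le_pos. apply Rlt_le, cond_pos. apply norm_ge_0.
Qed.

Lemma holo_proj (m : nat) : (m < 4)%nat -> holomorphic4 (fun p => comp4 p m).
Proof. intros Hm p. destruct p as [[a b] [c d]]. split.
  - destruct m as [|[|[|[|m]]]]; simpl; try lia.
    + apply (continuous_comp fst fst). apply continuous_fst. apply continuous_fst.
    + apply (continuous_comp fst snd). apply continuous_fst. apply continuous_snd.
    + apply (continuous_comp snd fst). apply continuous_snd. apply continuous_fst.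
    + apply (continuous_comp snd snd). apply continuous_snd. apply continuous_snd.
  - intros j Hj. destruct m as [|[|[|[|m]]]]; try lia;
    destruct j as [|[|[|[|j]]]]; try lia; simpl;
    first [apply exd_id | apply ex_derive_const].
Qed.

Lemma holo_opp F : holomorphic4 F -> holomorphic4 (fun p => opp (F p)).
Proof. intros H p. destruct (H p) as [H1 H2]. split.
  - exact (@continuous_opp _ C_AbsRing C_NormedModule F p H1).
  - intros j Hj. exact (@ex_derive_opp C_AbsRing C_NormedModule _ _ (H2 j Hj)). Qed.

Lemma part_anti : antiholomorphic4 iotaS.
Proof. intros k Hk. destruct k as [|[|[|[|k]]]]; try lia.
  - replace (fun p : C4 => Cconj (comp4 (iotaS p) 0)) with (fun p : C4 => comp4 p 3).
    apply holo_proj; lia. apply functional_extensionality. intros [[a b] [c d]].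
    unfold iotaS, C2opp, hat; simpl. conjs. ring.
  - replace (fun p : C4 => Cconj (comp4 (iotaS p) 1)) with (fun p : C4 => opp (comp4 p 2)).
    apply holo_opp, holo_proj; lia. apply functional_extensionality. intros [[a b] [c d]].
    unfold iotaS, C2opp, hat; simpl. conjs. reflexivity.
  - replace (fun p : C4 => Cconj (comp4 (iotaS p) 2)) with (fun p : C4 => opp (comp4 p 1)).
    apply holo_opp, holo_proj; lia. apply functional_extensionality. intros [[a b] [c d]].
    unfold iotaS, C2opp, hat; simpl. conjs. reflexivity.
  - replace (fun p : C4 => Cconj (comp4 (iotaS p) 3)) with (fun p : C4 => comp4 p 0).
    apply holo_proj; lia. apply functional_extensionality. intros [[a b] [c d]].
    unfold iotaS, C2opp, hat; simpl. conjs. reflexivity.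
Qed.


Lemma HD_dR_eq g l m : HD g l -> l = m -> dR g = m.
Proof. intros H <-. apply HD_dR; auto. Qed.

Ltac hd := lazymatch goal with
 | |- HD (fun _ => ?c) _ => apply HD_const
 | |- HD (fun t => (RtoC t * ?c)%C) _ => apply HD_lin
 | |- HD (fun t => (_ + _)%C) _ => apply HD_plus; hd
 | |- HD (fun t => (_ - _)%C) _ => apply HD_minus; hd
 | |- HD (fun t => (- _)%C) _ => apply HD_opp; hd
 | |- HD (fun t => Cconj _) _ => apply HD_conj; hd
 | |- HD (fun t => (/ _)%C) _ => apply HD_inv; [ | hd]
 | |- HD (fun t => (_ * _)%C) _ => apply HD_mult; hd
 end.

Ltac zs := repeat rewrite ?Cmult_0_l, ?Cplus_0_l, ?Cplus_0_r, ?Cmult_0_r.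

Definition TC N u : C := (1 + RtoC N * / rC u)%C.
Definition drC (u X : C2) : C :=
  (fst X * Cconj (fst u) + fst u * Cconj (fst X) + (snd X * Cconj (snd u) + snd u * Cconj (snd X)))%C.
Definition dTC N u X : C := (RtoC N * (- drC u X / (rC u * rC u)))%C.

Definition dPhiC N (u : C2) (s : C) (X : C2) (z : C) : C4 :=
 ((fst X + (z * - Cconj (snd u) + s * - Cconj (snd X)),
   snd X + (z * Cconj (fst u) + s * Cconj (fst X))),
  (- Cconj (snd X) + ((- z / (s*s) * TC N u + / s * dTC N u X) * fst u + / s * TC N u * fst X),
   Cconj (fst X) + ((- z / (s*s) * TC N u + / s * dTC N u X) * snd u + / s * TC N u * snd X)))%C.

Lemma dPhi_eq N u s X z : 0 < N -> u <> C2zero -> s <> RtoC 0 ->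
  dPhi N (u, s) (X, z) = dPhiC N u s X z.
Proof. intros HN Hu Hs. pose proof (rC_nz u Hu) as Hr.
  unfold dPhi, dPhiC, Phi, C2add, C2scal, hat. cbn [fst snd].
  unfold rC in Hr.
  f_equal; f_equal.
  { eapply HD_dR_eq. hd. cbv beta. conjs. ring. }
  { eapply HD_dR_eq. hd. cbv beta. conjs. ring. }
  { eapply HD_dR_eq.
    { eapply HD_ext. { intro t. rewrite theta2_C by auto. reflexivity. }
      unfold rC; cbn [fst snd]. hd; cbv beta; conjs; zs; auto. }
    cbv beta; conjs; zs.
    unfold TC, dTC, drC, rC. field. auto. }
  { eapply HD_dR_eq.
    { eapply HD_ext. { intro t. rewrite theta2_C by auto. reflexivity. }
      unfold rC; cbn [fst snd]. hd; cbv beta; conjs; zs; auto. }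
    cbv beta; conjs; zs.
    unfold TC, dTC, drC, rC. field. auto. }
Qed.


Definition Wx (X Y : C2) : C := (fst X * snd Y - snd X * fst Y)%C.
Definition Mx (X Y : C2) : C :=
  (fst X * Cconj (fst Y) - Cconj (fst X) * fst Y + (snd X * Cconj (snd Y) - Cconj (snd X) * snd Y))%C.
Definition mm (u A : C2) : C := (fst u * snd A - snd u * fst A)%C.
Definition qq (u A : C2) : C := (Cconj (fst u) * Cconj (snd A) - Cconj (snd u) * Cconj (fst A))%C.
Definition e0 N u X Y : C :=
  (- Mx X Y - RtoC N * (mm u X * qq u Y - mm u Y * qq u X) / (rC u * rC u))%C.
Definition em N u X Y : C := (- TC N u * Wx X Y)%C.
Definition e1 (X Y : C2) : C := (- Cconj (Wx X Y))%C.

Lemma integrand_alg N u s X Y : 0 < N -> u <> C2zero -> s <> RtoC 0 ->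
  (fst u + s * - Cconj (snd u))%C <> RtoC 0 ->
  OmegaN (Phi N u s) (dPhiC N u s C2zero (Ci * s)%C) (dPhiC N u s X (RtoC 0)) (dPhiC N u s Y (RtoC 0))
  = (- Ci * (em N u X Y * / s + e0 N u X Y + e1 X Y * s))%C.
Proof. intros HN Hu Hs Hv. pose proof (rC_nz u Hu) as Hr.
  unfold OmegaN, det3, Phi, dPhiC, C2add, C2scal, hat, C2zero. cbn [fst snd].
  try rewrite theta2_C by auto.
  unfold em, e0, e1, Wx, Mx, mm, qq, TC, dTC, drC, rC in *. conjs.
  destruct u as [u1 u2]; destruct X as [x1 x2]; destruct Y as [y1 y2]; cbn [fst snd] in *.
  rewrite !Cconj_RtoC. Time field. auto.
Qed.


Lemma RInt_trig k0 k1 k2 : RInt (fun t => k0 + k1 * cos t + k2 * sin t) 0 (2*PI) = 2*PI*k0.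
Proof.
  assert (H := is_RInt_derive (V:=R_CompleteNormedModule) (fun t => k0*t + k1*sin t - k2*cos t) (fun t => k0 + k1 * cos t + k2 * sin t) 0 (2*PI)).
  assert (D : forall x : R, Rmin 0 (2 * PI) <= x <= Rmax 0 (2 * PI) ->
   is_derive (fun t : R => k0 * t + k1 * sin t - k2 * cos t) x
     ((fun t : R => k0 + k1 * cos t + k2 * sin t) x)).
  { intros x _. auto_derive; auto. ring. }
  assert (Cn : forall x : R, Rmin 0 (2 * PI) <= x <= Rmax 0 (2 * PI) ->
   continuous (fun t : R => k0 + k1 * cos t + k2 * sin t) x).
  { intros x _. apply (ex_derive_continuous (fun t : R => k0 + k1 * cos t + k2 * sin t)). auto_derive; auto. }
  rewrite (is_RInt_unique _ _ _ _ (H D Cn)).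
  unfold minus, plus, opp; simpl. rewrite sin_2PI, cos_2PI, sin_0, cos_0. ring.
Qed.

Lemma RIntC_trig a b c : RIntC (fun t => a + b * RtoC (cos t) + c * RtoC (sin t))%C 0 (2*PI) = (RtoC (2*PI) * a)%C.
Proof. unfold RIntC. destruct a as [a1 a2], b as [b1 b2], c as [c1 c2]. simpl.
  rewrite (RInt_ext _ (fun t => a1 + b1 * cos t + c1 * sin t)).
  rewrite (RInt_ext (fun t => a2 + (b1 * 0 + b2 * cos t) + (c1 * 0 + c2 * sin t)) (fun t => a2 + b2 * cos t + c2 * sin t)).
  rewrite !RInt_trig. unfold RtoC, Cmult; simpl. f_equal; ring.
  all: intros x Hx; rewrite ?Rmult_0_r, ?Rminus_0_r, ?Rplus_0_l; reflexivity.
Qed.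


Lemma cs1 t : cos t * cos t + sin t * sin t = 1.
Proof. pose proof (sin2_cos2 t). unfold Rsqr in H. lra. Qed.

Lemma gamma_form eps t : gammaC eps t = (RtoC eps * (RtoC (cos t) + Ci * RtoC (sin t)))%C.
Proof. unfold gammaC, RtoC, Ci, Cmult, Cplus; simpl. f_equal; ring. Qed.

Lemma gamma'_eq eps t : gammaC' eps t = (Ci * gammaC eps t)%C.
Proof. unfold gammaC', gammaC, Ci, Cmult; simpl. f_equal; ring. Qed.

Lemma gamma_nz eps t : 0 < eps -> gammaC eps t <> RtoC 0.
Proof. intros He E. pose proof (cs1 t). unfold gammaC, RtoC in E. injection E; intros E2 E1.
  assert (cos t = 0) by (apply Rmult_eq_reg_l with eps; lra).
  assert (sin t = 0) by (apply Rmult_eq_reg_l with eps; lra). nra. Qed.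

Lemma gamma_inv eps t : 0 < eps -> (/ gammaC eps t)%C = (RtoC (/ eps) * (RtoC (cos t) - Ci * RtoC (sin t)))%C.
Proof. intro He. pose proof (cs1 t). pose proof (gamma_nz eps t He) as Hg.
  assert (P : (gammaC eps t * (RtoC (/ eps) * (RtoC (cos t) - Ci * RtoC (sin t))))%C = RtoC 1).
  { unfold gammaC, RtoC, Ci, Cmult, Cplus, Cminus, Copp; simpl. f_equal; field_simplify; try lra; nra. }
  rewrite <- (Cmult_1_r (/ gammaC eps t)), <- P. field. auto.
Qed.

Lemma Cmod_gamma eps t : 0 < eps -> Cmod (gammaC eps t) = eps.
Proof. intro He. pose proof (cs1 t). unfold Cmod, gammaC; simpl.
  replace (eps * cos t * (eps * cos t * 1) + eps * sin t * (eps * sin t * 1)) with (eps * eps) by nra.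
  apply sqrt_square. lra. Qed.

Lemma fibre_eq N u X Y eps : 0 < N -> u <> C2zero -> 0 < eps ->
  (forall t, (fst u + gammaC eps t * - Cconj (snd u))%C <> RtoC 0) ->
  fibre_int N eps u X Y = (RtoC (2*PI) * (- Ci * e0 N u X Y))%C.
Proof. intros HN Hu He Hv. unfold fibre_int.
  replace (fun t => PhiOmega N (u, gammaC eps t) (C2zero, gammaC' eps t) (X, RtoC 0) (Y, RtoC 0))
  with (fun t => ((- Ci * e0 N u X Y) + (- Ci * (em N u X Y * RtoC (/ eps) + e1 X Y * RtoC eps)) * RtoC (cos t)
          + (- Ci * (em N u X Y * RtoC (/ eps) * (- Ci) + e1 X Y * RtoC eps * Ci)) * RtoC (sin t))%C).
  { apply RIntC_trig. }
  apply functional_extensionality; intro t. unfold PhiOmega. cbn [fst snd].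
  pose proof (gamma_nz eps t He) as Hg.
  rewrite !dPhi_eq by auto. rewrite gamma'_eq. rewrite integrand_alg by auto.
  rewrite gamma_inv by auto. rewrite gamma_form. ring.
Qed.

Lemma omega_e0 N u X Y : u <> C2zero -> omegaN N u X Y = (- Ci * e0 N u X Y)%C.
Proof. intro Hu. pose proof (rC_nz u Hu) as Hr. unfold omegaN, wedge1, du1, du2, dub1, dub2.
  rewrite RtoC_pow, nrm2_rC. unfold e0, Mx, mm, qq, rC in *.
  destruct u as [u1 u2]; destruct X as [x1 x2]; destruct Y as [y1 y2]; cbn [fst snd] in *.
  field. auto. Qed.


Lemma part3a N (HN : 0 < N) (u : C2) : u <> C2zero ->
     exists eps0 : R, 0 < eps0 /\
       forall eps : R, 0 < eps < eps0 ->
         forall X Y : C2,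
           (RtoC (/ (2 * PI)) * fibre_int N eps u X Y)%C = omegaN N u X Y.
Proof. intro Hu.
  assert (Hfin : forall eps, 0 < eps -> (forall t, (fst u + gammaC eps t * - Cconj (snd u))%C <> RtoC 0) ->
     forall X Y, (RtoC (/ (2 * PI)) * fibre_int N eps u X Y)%C = omegaN N u X Y).
  { intros eps He Hv X Y. rewrite fibre_eq by auto. rewrite omega_e0 by auto.
    rewrite Cmult_assoc, <- RtoC_mult, Rinv_l. apply Cmult_1_l. pose proof PI_RGT_0. lra. }
  destruct u as [u1 u2].
  destruct (classic (u1 = RtoC 0)) as [E|E].
  - exists 1. split. lra. intros eps He. apply Hfin. lra. intros t. cbn [fst snd]. rewrite E, Cplus_0_l.
    apply Cmult_neq_0. apply gamma_nz; lra.
    intro F. assert (u2 = RtoC 0).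
    { assert (G : Cconj u2 = RtoC 0).
      { replace (Cconj u2) with (- (- Cconj u2))%C by ring. rewrite F. ring. }
      rewrite <- (Cconj_conj u2), G. apply Cconj_RtoC. }
    apply Hu. subst. reflexivity.
  - assert (Hm : 0 < Cmod u1) by (apply Cmod_gt_0; auto).
    pose proof (Cmod_ge_0 u2).
    exists (Cmod u1 / (Cmod u2 + 1)). split. apply Rdiv_lt_0_compat; lra.
    intros eps [He Hlt] . apply Hfin; auto. intros t. cbn [fst snd]. intro F.
    assert (F' : u1 = (gammaC eps t * Cconj u2)%C).
    { transitivity ((u1 + gammaC eps t * - Cconj u2) + gammaC eps t * Cconj u2)%C. ring. rewrite F. ring. }
    assert (Cmod u1 = eps * Cmod u2).
    { rewrite F', Cmod_mult, Cmod_conj, Cmod_gamma; auto. }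
    apply (Rmult_lt_compat_r (Cmod u2 + 1)) in Hlt; [|lra].
    unfold Rdiv in Hlt. rewrite Rmult_assoc, Rinv_l, Rmult_1_r in Hlt by lra. nra.
Qed.


Lemma Ci2 : (Ci ^ 2 = - 1)%C. Proof. unfold Ci, Cpow, Cmult, RtoC; simpl. f_equal; ring. Qed.
Lemma Ci3 : (Ci ^ 3 = - Ci)%C. Proof. unfold Ci, Cpow, Cmult, Copp, RtoC; simpl. f_equal; ring. Qed.
Lemma Ci4 : (Ci ^ 4 = 1)%C. Proof. unfold Ci, Cpow, Cmult, RtoC; simpl. f_equal; ring. Qed.

Lemma HD_eq g l m : HD g l -> l = m -> HD g m.
Proof. intros H <-; exact H. Qed.

Lemma C2add_0 q e : C2add q (C2scal (RtoC 0) e) = q.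
Proof. destruct q as [a b]; unfold C2add, C2scal; simpl. f_equal; ring. Qed.

Lemma HD_nrm2 q e : HD (fun t => RtoC (nrm2 (C2add q (C2scal (RtoC t) e)))) (drC q e).
Proof. eapply HD_ext. { intro t. rewrite nrm2_rC. reflexivity. }
  unfold rC, C2add, C2scal; cbn [fst snd]. eapply HD_eq. hd.
  cbv beta. unfold drC. conjs. zs. ring. Qed.

Lemma drC_real q e : RtoC (Re (drC q e)) = drC q e.
Proof. rewrite re_alt. unfold drC. conjs. field. Qed.

Lemma pdR_K N q e : 0 < N -> q <> C2zero -> pdR (Kpot N) q e = (drC q e * TC N q)%C.
Proof. intros HN Hq. pose proof (nrm2_pos q Hq) as Hp.
  pose proof (HD_RtoC_inv _ _ (HD_nrm2 q e)) as D.
  unfold pdR. eapply HD_dR_eq.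
  - unfold Kpot. apply HD_RtoC.
    apply is_derive_Reals. apply is_derive_Reals in D.
    apply (derivable_pt_lim_plus (fun t => nrm2 (C2add q (C2scal (RtoC t) e)))
       (fun t => N * ln (nrm2 (C2add q (C2scal (RtoC t) e))))). exact D.
    apply (derivable_pt_lim_scal (fun t => ln (nrm2 (C2add q (C2scal (RtoC t) e))))).
    apply (derivable_pt_lim_comp (fun t => nrm2 (C2add q (C2scal (RtoC t) e))) ln). exact D.
    apply derivable_pt_lim_ln. rewrite C2add_0. exact Hp.
  - rewrite C2add_0. unfold Re in *. rewrite RtoC_plus, !RtoC_mult, RtoC_inv by lra.
    change (fst (drC q e)) with (Re (drC q e)). rewrite drC_real, nrm2_rC.
    pose proof (rC_nz q Hq). unfold TC. field. auto.
Qed.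

Lemma Wdb_K N k q : 0 < N -> q <> C2zero ->
  Wdb k (Kpot N) q = ((match k with 0%nat => fst q | _ => snd q end) * TC N q)%C.
Proof. intros HN Hq. unfold Wdb. rewrite !pdR_K by auto.
  destruct k; unfold e2, drC; destruct q as [q1 q2]; cbn [fst snd]; conjs; field_simplify; rewrite ?Ci2; field.
Qed.

Lemma nrm2_zero : nrm2 C2zero = 0.
Proof. unfold nrm2, C2zero; simpl. rewrite Cmod_0. ring. Qed.

Lemma loc_nz u e : u <> C2zero -> locally 0 (fun t => C2add u (C2scal (RtoC t) e) <> C2zero).
Proof. intro Hu. pose proof (nrm2_pos u Hu) as Hp.
  pose proof (HD_RtoC_inv _ _ (HD_nrm2 u e)) as D. apply is_derive_Reals in D.
  set (f := fun t => nrm2 (C2add u (C2scal (RtoC t) e))) in D.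
  assert (Cn : continuity_pt f 0) by (apply derivable_continuous_pt; exact (exist _ _ D)).
  destruct (Cn (nrm2 u) Hp) as [d [Hd H]].
  exists (mkposreal d Hd). intros y Hy.
  assert (Hy' : Rabs (y - 0) < d).
  { unfold ball in Hy; simpl in Hy. unfold AbsRing_ball, abs, minus, plus, opp in Hy; simpl in Hy. exact Hy. }
  destruct (Req_dec y 0) as [E|E].
  - subst y. rewrite C2add_0. exact Hu.
  - assert (Hf : R_dist (f y) (f 0) < nrm2 u).
    { apply H. split. split. exact I. auto. exact Hy'. }
    unfold f in Hf. rewrite C2add_0 in Hf. unfold R_dist in Hf. intro Z. rewrite Z, nrm2_zero in Hf.
    rewrite Rminus_0_l, Rabs_Ropp, Rabs_pos_eq in Hf by lra. lra.
Qed.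

Definition cmp (k : nat) (q : C2) : C := match k with 0%nat => fst q | _ => snd q end.

Lemma pdR_W N k u e : 0 < N -> u <> C2zero ->
  pdR (Wdb k (Kpot N)) u e = (cmp k e * TC N u + cmp k u * dTC N u e)%C.
Proof. intros HN Hu. pose proof (rC_nz u Hu) as Hr. unfold pdR.
  destruct k; eapply HD_dR_eq.
  - eapply HD_ext_loc.
    { apply (filter_imp (fun t => C2add u (C2scal (RtoC t) e) <> C2zero)).
      intros t Ht. rewrite (Wdb_K N 0 _ HN Ht). reflexivity. apply loc_nz; auto. }
    unfold rC in Hr. unfold TC, rC, C2add, C2scal; cbn [fst snd]; hd; cbv beta; conjs; zs; auto.
  - cbv beta. unfold cmp, dTC, drC, TC, rC in *. cbn [fst snd]; conjs; zs; field; auto.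
  - eapply HD_ext_loc.
    { apply (filter_imp (fun t => C2add u (C2scal (RtoC t) e) <> C2zero)).
      intros t Ht. rewrite (Wdb_K N (S k) _ HN Ht). reflexivity. apply loc_nz; auto. }
    unfold rC in Hr. unfold TC, rC, C2add, C2scal; cbn [fst snd]; hd; cbv beta; conjs; zs; auto.
  - cbv beta. unfold cmp, dTC, drC, TC, rC in *. cbn [fst snd]; conjs; zs; field; auto.
Qed.

Lemma Ci_sq : (Ci * Ci = - RtoC 1)%C.
Proof. unfold Ci, Cmult, Copp, RtoC; simpl. f_equal; ring. Qed.

Definition dl (j k : nat) : C :=
  match j, k with 0%nat, 0%nat => RtoC 1 | S _, S _ => RtoC 1 | _, _ => RtoC 0 end.

Lemma Wd_K N j k u : 0 < N -> u <> C2zero ->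
  Wd j (Wdb k (Kpot N)) u = (dl j k * TC N u - RtoC N * cmp k u * Cconj (cmp j u) / (rC u * rC u))%C.
Proof. intros HN Hu. pose proof (rC_nz u Hu) as Hr. unfold Wd. rewrite !pdR_W by auto.
  assert (E : (cmp k (e2 j Ci) * TC N u + cmp k u * dTC N u (e2 j Ci))%C =
     (Ci * (dl j k * TC N u + cmp k u * (RtoC N * (- (Cconj (cmp j u) - cmp j u)) / (rC u * rC u))))%C).
  { unfold dTC, drC. destruct j; destruct k; unfold cmp, e2, dl; cbn [fst snd]; conjs; zs; field; auto. }
  rewrite E, Cmult_assoc, Ci_sq.
  unfold dTC, drC. destruct j; destruct k; unfold cmp, e2, dl; cbn [fst snd]; conjs; zs; field; auto.
Qed.

Lemma part3b N (HN : 0 < N) (u : C2) : u <> C2zero ->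
     forall X Y : C2, omegaN N u X Y = (Ci * ddbar (Kpot N) u X Y)%C.
Proof. intros Hu X Y. pose proof (rC_nz u Hu) as Hr.
  unfold ddbar, omegaN. rewrite !Wd_K by auto.
  rewrite RtoC_pow, nrm2_rC.
  unfold wedge1, duj, dubj, du1, du2, dub1, dub2, cmp, dl, TC, rC in *.
  destruct u as [u1 u2]; destruct X as [x1 x2]; destruct Y as [y1 y2]; cbn [fst snd] in *.
  field. auto.
Qed.


Theorem mainTheorem3 (N : R) (HN : 0 < N) :
  (* (i) *)
  (forall (u : C2) (s : C), u <> C2zero -> s <> RtoC 0 -> Squad N (Phi N u s)) /\
  (* (ii) iotaS is a fixed-point-free antiholomorphic involution of S *)
  ((forall p : C4, Squad N p -> Squad N (iotaS p)) /\
   (forall p : C4, Squad N p -> iotaS (iotaS p) = p) /\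
   (forall p : C4, Squad N p -> iotaS p <> p) /\
   antiholomorphic4 iotaS /\
   (forall (u : C2) (s : C), u <> C2zero -> s <> RtoC 0 ->
      iotaS (Phi N u (RtoC (theta N u) * s)%C)
      = Phi N u (RtoC (theta N u) * (- / Cconj s))%C)) /\
  (* (iii) fibre integral over small circles, and omega_N = i d d-bar K *)
  (forall u : C2, u <> C2zero ->
     exists eps0 : R, 0 < eps0 /\
       forall eps : R, 0 < eps < eps0 ->
         forall X Y : C2,
           (RtoC (/ (2 * PI)) * fibre_int N eps u X Y)%C = omegaN N u X Y) /\
  (forall u : C2, u <> C2zero ->
     forall X Y : C2, omegaN N u X Y = (Ci * ddbar (Kpot N) u X Y)%C).
Proof.
  split. { intros u s Hu Hs. apply part1; auto. }
  split.
  { split. { intros p H. apply iota_Squad; auto. }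
    split. { intros p _. apply iota_invol. }
    split. { intros p H. apply iota_nofix with N; auto. }
    split. { apply part_anti. }
    intros u s Hu Hs. apply iota_Phi; auto. }
  split. { intros u Hu. apply part3a; auto. }
  intros u Hu X Y. apply part3b; auto.
Qed.
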